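(* Let $a\in\mathbb{R}$, $\lambda\in[0,1)$, and let $f=h+\overline{g}$, where $h,g$ are analytic in $\mathbb{D}$ with $h(0)=g(0)=0$, $h-g=k_a$ and $g'/h'=\lambda z$ in $\mathbb{D}$. Then $$P_f(z)=\frac{2(z+a)}{1-z^2}+\frac{\lambda}{1-\lambda z}-\frac{\lambda^2\bar z}{1-|\lambda z|^2}\qquad(z\in\mathbb{D}),$$ and $$\|P_f\|\le 2(1+|a|)+2\lambda^2+\lambda .$$
   Context: $\mathbb{D}$ is the open unit disk. For $a\neq0$, $k_a(z)=\frac{1}{2a}\left[\left(\frac{1+z}{1-z}\right)^a-1\right]$ (principal branch), and $k_0(z)=\frac12\log\frac{1+z}{1-z}$. For a locally univalent harmonic mapping $f=h+\overline g$ with dilatation $\omega=g'/h'$, the pre-Schwarzian derivative is $P_f(z)=\frac{h''(z)}{h'(z)}-\frac{\omega'(z)\overline{\omega(z)}}{1-|\omega(z)|^2}$, and the pre-Schwarzian norm is $\|P_f\|=\sup_{z\in\mathbb{D}}|P_f(z)|(1-|z|^2)$. *)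

(* Defs.v *)
From Stdlib Require Import Reals.
From Coquelicot Require Import Coquelicot.
Open Scope R_scope.

Definition in_disk (z : C) : Prop := Cmod z < 1.

Definition analytic_on_disk (f : C -> C) : Prop :=
  forall z : C, in_disk z -> ex_derive f z.

(* Principal argument, with values in (-PI, PI]. *)
Definition Arg (w : C) : R :=
  let x := fst w in let y := snd w in
  if Rlt_dec 0 x then atan (y / x)
  else if Rlt_dec x 0 then
    (if Rle_dec 0 y then atan (y / x) + PI else atan (y / x) - PI)
  else if Rlt_dec 0 y then PI / 2
  else if Rlt_dec y 0 then - (PI / 2)
  else 0.

Definition Clog (w : C) : C := (ln (Cmod w), Arg w).

Definition Cexp (w : C) : C := (exp (fst w) * cos (snd w), exp (fst w) * sin (snd w)).

Definition Cpow_principal (w : C) (a : R) : C :=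
  if Ceq_dec w 0 then 0%C else Cexp (RtoC a * Clog w)%C.

Definition k_fun (a : R) (z : C) : C :=
  let w := ((1 + z) / (1 - z))%C in
  if Req_EM_T a 0 then (/ 2 * Clog w)%C
  else (/ (2 * RtoC a) * (Cpow_principal w a - 1))%C.

Definition dilatation (h g : C -> C) (z : C) : C :=
  (C_derive g z / C_derive h z)%C.

(* Pre-Schwarzian derivative of f = h + conj g. *)
Definition pre_schwarzian (h g : C -> C) (z : C) : C :=
  let w := dilatation h g in
  (C_derive (C_derive h) z / C_derive h z
   - C_derive w z * Cconj (w z) / RtoC (1 - (Cmod (w z)) ^ 2))%C.

Definition pre_schwarzian_norm (h g : C -> C) : Rbar :=
  Lub_Rbar (fun r : R => exists z : C, in_disk z /\
              r = Cmod (pre_schwarzian h g z) * (1 - (Cmod z) ^ 2)).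

(* Main.v *)
Require Import Defs.
From Stdlib Require Import Reals Lra Psatz.
From Coquelicot Require Import Coquelicot.
Open Scope R_scope.

Lemma Rabs_le_inv a b : Rabs a <= b -> - b <= a <= b.
Proof. unfold Rabs; destruct (Rcase_abs a); lra. Qed.

Lemma sin_near0 t : Rabs t <= 1 -> Rabs (sin t - t) <= t ^ 2.
Proof.
  intros Ht.
  assert (P : forall a, 0 <= a <= 1 -> Rabs (sin a - a) <= a ^ 2).
  { intros a Ha. destruct (pre_sin_bound a 0 ltac:(lra) ltac:(lra)) as [H1 H2].
    unfold sin_approx, sin_term in H1. simpl in H1.
    assert (sin a <= a).
    { destruct (Req_dec a 0). subst. rewrite sin_0; lra. left. apply sin_lt_x. lra. }
    rewrite Rabs_left1 by lra. 
    assert (a - a^3/6 <= sin a) by (field_simplify in H1; field_simplify; lra).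
    nra. }
  destruct (Rle_dec 0 t).
  - apply P. apply Rabs_le_inv in Ht. lra.
  - replace (sin t - t) with (- (sin (-t) - (-t))) by (rewrite sin_neg; ring).
    rewrite Rabs_Ropp. replace (t^2) with ((-t)^2) by ring. apply P.
    apply Rabs_le_inv in Ht. lra.
Qed.

Lemma cos_near0 t : Rabs t <= 1 -> Rabs (cos t - 1) <= t ^ 2 / 2.
Proof.
  intros Ht. apply Rabs_le_inv in Ht.
  destruct (pre_cos_bound t 0 ltac:(lra) ltac:(lra)) as [H1 H2].
  unfold cos_approx, cos_term in H1. simpl in H1.
  pose proof (COS_bound t).
  rewrite Rabs_left1 by lra.
  field_simplify in H1. lra.
Qed.

Lemma exp_near0 s : Rabs s <= 1 -> Rabs (exp s - 1 - s) <= 3 * s ^ 2.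
Proof.
  intros Hs. apply Rabs_le_inv in Hs.
  pose proof (exp_ineq1_le s).
  pose proof (exp_ineq1_le (- (s/2))).
  assert (E : exp s = exp (s/2) * exp (s/2)) by (rewrite <- exp_plus; f_equal; field).
  assert (E2 : exp (s/2) * exp (- (s/2)) = 1) by (rewrite <- exp_plus; replace (s/2 + - (s/2)) with 0 by ring; apply exp_0).
  pose proof (exp_pos (s/2)).
  set (x := exp (s/2)) in *. set (y := exp (-(s/2))) in *.
  assert (x * (1 - s/2) <= 1) by nra.
  assert (0 <= x * (1 - s/2)) by (apply Rmult_le_pos; lra).
  assert (x * x * ((1 - s/2) * (1 - s/2)) <= 1).
  { replace (x * x * ((1 - s/2) * (1 - s/2))) with ((x * (1 - s/2)) * (x * (1 - s/2))) by ring.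
    set (q := x * (1 - s/2)) in *. nra. }
  rewrite Rabs_right by lra. rewrite E.
  assert ((1 + s + 3 * s^2) * ((1 - s/2) * (1 - s/2)) >= 1) by nra.
  nra.
Qed.

Lemma exp_le3 s : s <= 1 -> exp s <= 3.
Proof. intros. pose proof exp_le_3. destruct (Req_dec s 1). subst; lra.
  pose proof (exp_increasing s 1 ltac:(lra)). lra. Qed.

Notation isD f z l := (@is_derive C_AbsRing C_NormedModule f z l).

Lemma is_derive_bound (f : C -> C) (z l : C) (d M : R) :
  0 < d -> 0 <= M ->
  (forall w, Cmod (w - z) < d -> Cmod (f w - f z - l * (w - z))%C <= M * Cmod (w - z) ^ 2) ->
  is_derive f z l.
Proof.
  intros Hd HM H. split.
  - apply is_linear_scal_l.
  - intros x Hx. apply (@is_filter_lim_locally_unique _ (AbsRing_NormedModule C_AbsRing)) in Hx. subst x.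
    intros eps.
    assert (He : 0 < Rmin d (eps / (M + 1))).
    { apply Rmin_pos; auto. apply Rdiv_lt_0_compat. apply cond_pos. lra. }
    exists (mkposreal _ He). intros w Hw.

    unfold ball in Hw; simpl in Hw. unfold AbsRing_ball in Hw.
    change (Cmod (w - z) < Rmin d (eps / (M + 1))) in Hw.
    change (Cmod (f w - f z - (w - z) * l)%C <= eps * Cmod (w - z)).
    rewrite Cmult_comm.
    assert (H1 := H w (Rlt_le_trans _ _ _ Hw (Rmin_l _ _))).
    assert (H2 := Rlt_le_trans _ _ _ Hw (Rmin_r _ _)).
    pose proof (Cmod_ge_0 (w - z)).
    eapply Rle_trans. apply H1.
    assert (M * Cmod (w - z) <= eps).
    { apply Rle_trans with ((M+1) * (eps / (M + 1))).
      apply Rmult_le_compat; lra.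
      right. field. lra. }
    pose proof (cond_pos eps). nra.
Qed.

Lemma transfer (f : C -> C) z l : @is_derive C_AbsRing C_NormedModule f z l -> @is_derive C_AbsRing (AbsRing_NormedModule C_AbsRing) f z l.
Proof. intros [H1 H2]. split. 
 destruct H1 as [A B Hn]. split; [exact A | exact B | destruct Hn as [M HM]; exists M; exact HM].
 intros x Hx eps. specialize (H2 x Hx eps). exact H2. Qed.
Lemma transfer2 (f : C -> C) z l : @is_derive C_AbsRing (AbsRing_NormedModule C_AbsRing) f z l -> @is_derive C_AbsRing C_NormedModule f z l.
Proof. intros [H1 H2]. split. 
 destruct H1 as [A B Hn]. split; [exact A | exact B | destruct Hn as [M HM]; exists M; exact HM].
 intros x Hx eps. specialize (H2 x Hx eps). exact H2. Qed.

Lemma dC_plus (f g : C -> C) (z a b : C) : is_derive f z a -> is_derive g z b ->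
  is_derive (fun x => f x + g x)%C z (a + b)%C.
Proof. intros. apply (is_derive_plus f g z a b); auto. Qed.

Lemma dC_minus (f g : C -> C) (z a b : C) : is_derive f z a -> is_derive g z b ->
  is_derive (fun x => f x - g x)%C z (a - b)%C.
Proof. intros. apply (is_derive_minus f g z a b); auto. Qed.

Lemma dC_mult (f g : C -> C) (z a b : C) : is_derive f z a -> is_derive g z b ->
  is_derive (fun x => f x * g x)%C z (a * g z + f z * b)%C.
Proof. intros. apply transfer2. apply transfer in H. apply transfer in H0. exact (@is_derive_mult C_AbsRing f g z a b H H0 Cmult_comm). Qed.

Lemma dC_comp (f g : C -> C) (z a b : C) : is_derive f (g z) a -> is_derive g z b ->
  is_derive (fun x => f (g x)) z (b * a)%C.
Proof. intros. apply transfer in H0. apply (is_derive_comp f g z a b); auto. Qed.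

Lemma dC_const (c z : C) : is_derive (fun _ => c) z (RtoC 0).
Proof. apply (@is_derive_const C_AbsRing C_NormedModule). Qed.

Lemma dC_id (z : C) : isD (fun x : C => x) z (RtoC 1).
Proof. apply transfer2. apply (@is_derive_id C_AbsRing). Qed.

Lemma dC_Cinv (z : C) : z <> 0%C -> is_derive Cinv z (- / (z * z))%C.
Proof.
  intros Hz. pose proof (proj1 (Cmod_gt_0 z) Hz) as Hm.
  apply (is_derive_bound _ _ _ (Cmod z / 2) (2 / (Cmod z ^ 3))).
  lra. apply Rlt_le, Rdiv_lt_0_compat; [lra| apply pow_lt; auto].
  intros w Hw.
  assert (Hw2 : Cmod z / 2 <= Cmod w).
  { pose proof (Cmod_triangle w (z - w)%C).
    replace (w + (z - w))%C with z in H by ring.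
    rewrite <- Cmod_opp, Copp_minus_distr in Hw. lra. }
  assert (Hw0 : w <> 0%C). { intro E. subst. rewrite Cmod_0 in Hw2. lra. }
  replace (/ w - / z - - / (z * z) * (w - z))%C with ((w - z) * (w - z) / (w * (z * z)))%C
    by (field; split; auto).
  rewrite Cmod_div, !Cmod_mult. 2: { apply Cmult_neq_0; auto. apply Cmult_neq_0; auto. }
  pose proof (Cmod_ge_0 (w - z)).
  unfold Rdiv. rewrite Rinv_mult. 
  apply Rmult_le_reg_r with (Cmod w * (Cmod z * Cmod z)). 
  apply Rmult_lt_0_compat; [lra| nra].
  field_simplify; try lra.
  assert (H1 : 1 <= 2 * Cmod w / Cmod z).
  { unfold Rdiv. apply Rmult_le_reg_r with (Cmod z); auto. rewrite Rmult_assoc, Rinv_l; lra. }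
  replace (2 * Cmod (w - z) ^ 2 * Cmod w / Cmod z) with (Cmod (w - z) ^ 2 * (2 * Cmod w / Cmod z)) by (field; lra).
  pose proof (pow2_ge_0 (Cmod (w - z))). nra.
Qed.


Lemma Cmod_le_sum (c : C) : Cmod c <= Rabs (fst c) + Rabs (snd c).
Proof.
  destruct c as [x y]. unfold Cmod; simpl.
  rewrite <- (sqrt_Rsqr (Rabs x + Rabs y)) by (pose proof (Rabs_pos x); pose proof (Rabs_pos y); lra).
  apply sqrt_le_1_alt. unfold Rsqr.
  pose proof (Rabs_pos x); pose proof (Rabs_pos y).
  replace (x * (x * 1) + y * (y * 1)) with (Rabs x * Rabs x + Rabs y * Rabs y)
    by (rewrite <- !Rabs_mult, !Rabs_right by nra; ring). nra.
Qed.

Lemma fst_le_Cmod (c : C) : Rabs (fst c) <= Cmod c.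
Proof. pose proof (Rmax_Cmod c). pose proof (Rmax_l (Rabs (fst c)) (Rabs (snd c))). lra. Qed.
Lemma snd_le_Cmod (c : C) : Rabs (snd c) <= Cmod c.
Proof. pose proof (Rmax_Cmod c). pose proof (Rmax_r (Rabs (fst c)) (Rabs (snd c))). lra. Qed.

Lemma Cexp_plus a b : Cexp (a + b)%C = (Cexp a * Cexp b)%C.
Proof.
  destruct a as [x y], b as [u v]. unfold Cexp; simpl.
  rewrite exp_plus, cos_plus, sin_plus. apply injective_projections; simpl; ring.
Qed.

Lemma Cexp_near0 (u : C) : Cmod u < 1 -> Cmod (Cexp u - 1 - u)%C <= 20 * Cmod u ^ 2.
Proof.
  intros Hu. pose proof (fst_le_Cmod u). pose proof (snd_le_Cmod u).
  destruct u as [s t]. simpl in *. set (c := Cmod (s, t)) in *.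
  eapply Rle_trans. apply Cmod_le_sum. unfold Cexp; simpl.
  assert (Hs : Rabs s <= 1) by lra. assert (Ht : Rabs t <= 1) by lra.
  pose proof (sin_near0 t Ht). pose proof (cos_near0 t Ht). pose proof (exp_near0 s Hs).
  assert (He : exp s <= 3) by (apply exp_le3; apply Rabs_le_inv in Hs; lra).
  pose proof (exp_pos s).
  assert (R1 : Rabs (exp s * cos t - 1 - s) <= 3 * (t^2/2) + 3 * s^2).
  { replace (exp s * cos t - 1 - s) with (exp s * (cos t - 1) + (exp s - 1 - s)) by ring.
    eapply Rle_trans. apply Rabs_triang. rewrite Rabs_mult, (Rabs_right (exp s)) by lra.
    pose proof (Rabs_pos (cos t - 1)). nra. }
  assert (R2 : Rabs (exp s * sin t - t) <= 3 * t^2 + (Rabs s + 3 * s^2) * Rabs t).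
  { replace (exp s * sin t - t) with (exp s * (sin t - t) + ((exp s - 1 - s) + s) * t) by ring.
    eapply Rle_trans. apply Rabs_triang. rewrite !Rabs_mult, (Rabs_right (exp s)) by lra.
    pose proof (Rabs_pos (sin t - t)). pose proof (Rabs_pos t).
    pose proof (Rabs_triang (exp s - 1 - s) s). pose proof (Rabs_pos (exp s - 1 - s + s)).
    nra. }
  pose proof (Rabs_pos s). pose proof (Rabs_pos t).
  assert (s^2 <= c^2). { rewrite <- (pow2_abs s). apply pow_incr. lra. }
  assert (t^2 <= c^2). { rewrite <- (pow2_abs t). apply pow_incr. lra. }
  assert (Rabs s * Rabs t <= c ^ 2) by nra.
  assert (s^2 * Rabs t <= s^2) by (pose proof (pow2_ge_0 s); nra).
  assert ((Rabs s + 3 * s^2) * Rabs t <= c^2 + 3 * c^2) by nra.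
  clearbody c. match goal with |- Rabs ?A + Rabs ?B <= _ => replace A with (exp s * cos t - 1 - s) by ring; replace B with (exp s * sin t - t) by ring end.
  simpl. replace (c * (c * 1)) with (c ^ 2) by ring. pose proof (pow2_ge_0 c). lra.
Qed.

Lemma Cexp_neq0 w : Cexp w <> 0%C.
Proof.
  intro E. unfold Cexp in E. injection E as E1 E2.
  pose proof (exp_pos (fst w)). pose proof (sin2_cos2 (snd w)).
  assert (cos (snd w) = 0) by (apply Rmult_eq_reg_l with (exp (fst w)); lra).
  assert (sin (snd w) = 0) by (apply Rmult_eq_reg_l with (exp (fst w)); lra).
  unfold Rsqr in H0. rewrite H1, H2 in H0. lra.
Qed.

Lemma dC_Cexp z : isD Cexp z (Cexp z).
Proof.
  apply (is_derive_bound _ _ _ 1 (20 * Cmod (Cexp z))). lra.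
  pose proof (Cmod_ge_0 (Cexp z)). lra.
  intros w Hw.
  replace w with (z + (w - z))%C at 1 by ring.
  rewrite Cexp_plus.
  replace (Cexp z * Cexp (w - z) - Cexp z - Cexp z * (w - z))%C
    with (Cexp z * (Cexp (w - z) - 1 - (w - z)))%C by ring.
  rewrite Cmod_mult. pose proof (Cmod_ge_0 (Cexp z)).
  pose proof (Cexp_near0 (w - z) Hw). replace (20 * Cmod (Cexp z) * Cmod (w - z) ^ 2) with (Cmod (Cexp z) * (20 * Cmod (w - z) ^ 2)) by ring.
  apply Rmult_le_compat_l; auto.
Qed.

Lemma Arg_pos w : 0 < fst w -> Arg w = atan (snd w / fst w).
Proof. intros H. unfold Arg. destruct (Rlt_dec 0 (fst w)); [reflexivity| lra]. Qed.

Lemma ln_lip a b m : 0 < m -> m <= a -> m <= b -> Rabs (ln a - ln b) <= Rabs (a - b) / m.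
Proof.
  intros Hm Ha Hb.
  destruct (MVT_abs ln (fun x => / x) b a) as [c [Hc1 Hc2]].
  { intros c Hc. apply derivable_pt_lim_ln. pose proof (Rmin_glb b a m). lra. }
  rewrite Hc1. assert (m <= c) by (pose proof (Rmin_glb b a m); lra).
  rewrite Rabs_inv, Rabs_right by lra.
  unfold Rdiv. rewrite Rmult_comm. apply Rmult_le_compat_l. apply Rabs_pos.
  apply Rinv_le_contravar; lra.
Qed.

Lemma atan_lip p q : Rabs (atan p - atan q) <= Rabs (p - q).
Proof.
  destruct (MVT_abs atan (fun x => / (1 + x ^ 2)) q p) as [c [Hc1 Hc2]].
  { intros c Hc. apply derivable_pt_lim_atan. }
  rewrite Hc1. pose proof (pow2_ge_0 c).
  rewrite Rabs_inv, Rabs_right by lra.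
  rewrite <- (Rmult_1_l (Rabs (p - q))) at 2.
  apply Rmult_le_compat_r. apply Rabs_pos.
  rewrite <- Rinv_1. apply Rinv_le_contravar; lra.
Qed.

Definition Klip (z : C) : R := 2 / fst z + 2 * (fst z + Rabs (snd z)) / (fst z ^ 2).

Lemma Klip_pos z : 0 < fst z -> 0 < Klip z.
Proof.
  intros H. unfold Klip. pose proof (Rabs_pos (snd z)).
  assert (0 < 2 / fst z) by (apply Rdiv_lt_0_compat; lra).
  assert (0 <= 2 * (fst z + Rabs (snd z)) / (fst z ^ 2)).
  { apply Rle_mult_inv_pos. lra. apply pow_lt; lra. }
  lra.
Qed.

Lemma Cmod_rev_tri (w z : C) : Rabs (Cmod w - Cmod z) <= Cmod (w - z).
Proof.
  pose proof (Cmod_triangle (w - z) z). pose proof (Cmod_triangle (z - w) w).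
  replace (w - z + z)%C with w in H by ring. replace (z - w + w)%C with z in H0 by ring.
  assert (Cmod (z - w) = Cmod (w - z)) as E by (rewrite <- Cmod_opp; f_equal; ring). rewrite E in H0.
  apply Rabs_le. lra.
Qed.

Lemma Clog_lip z w : 0 < fst z -> Cmod (w - z) < fst z / 2 ->
  Cmod (Clog w - Clog z)%C <= Klip z * Cmod (w - z).
Proof.
  intros Hz Hw.
  pose proof (fst_le_Cmod (w - z)%C) as H1. pose proof (snd_le_Cmod (w - z)%C) as H2.
  destruct w as [xw yw], z as [xz yz]. simpl in *.
  set (c := Cmod ((xw, yw) - (xz, yz))%C) in *.
  apply Rabs_le_inv in H1.
  assert (Hxw : xz / 2 < xw) by lra.
  unfold Clog. rewrite !Arg_pos by (simpl; lra). simpl.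
  eapply Rle_trans. apply Cmod_le_sum. simpl.
  pose proof (re_le_Cmod (xw, yw)). pose proof (re_le_Cmod (xz, yz)). simpl in *.
  rewrite Rabs_right in H, H0 by lra.
  assert (P1 : Rabs (ln (Cmod (xw, yw)) + - ln (Cmod (xz, yz))) <= c * (2 / xz)).
  { eapply Rle_trans. apply (ln_lip _ _ (xz / 2)); lra.
    pose proof (Cmod_rev_tri (xw, yw) (xz, yz)). fold c in H3.
    apply Rle_trans with (c / (xz / 2)).
    unfold Rdiv. apply Rmult_le_compat_r. apply Rlt_le, Rinv_0_lt_compat; lra. exact H3.
    right. field. lra. }
  assert (P2 : Rabs (atan (yw / xw) + - atan (yz / xz)) <= c * (2 * (xz + Rabs yz) / (xz ^ 2))).
  { eapply Rle_trans. apply atan_lip.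
    replace (yw / xw - yz / xz) with (((yw - yz) * xz - yz * (xw - xz)) / (xw * xz)) by (field; lra).
    rewrite Rabs_div, (Rabs_right (xw * xz)) by nra.
    assert (N : Rabs ((yw - yz) * xz - yz * (xw - xz)) <= c * (xz + Rabs yz)).
    { eapply Rle_trans. apply Rabs_triang. rewrite Rabs_Ropp, !Rabs_mult, (Rabs_right xz) by lra.
      pose proof (Rabs_pos yz).
      assert (Rabs (xw - xz) <= c) by (apply Rabs_le; lra).
      change (Rabs (yw - yz) <= c) in H2. pose proof (Rabs_pos (xw - xz)). pose proof (Rabs_pos (yw - yz)). nra. }
    apply Rle_trans with (c * (xz + Rabs yz) / (xw * xz)).
    { unfold Rdiv. apply Rmult_le_compat_r. apply Rlt_le, Rinv_0_lt_compat. nra. exact N. }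
    pose proof (Rabs_pos yz). pose proof (Cmod_ge_0 ((xw, yw) - (xz, yz))%C). fold c in H4.
    replace (c * (2 * (xz + Rabs yz) / xz ^ 2)) with (c * (xz + Rabs yz) * / (xz / 2 * xz)) by (field; lra).
    unfold Rdiv. apply Rmult_le_compat_l. nra. apply Rinv_le_contravar; nra. }
  unfold Klip; cbn [fst snd]. rewrite Rmult_plus_distr_r, (Rmult_comm (2 / xz)), (Rmult_comm (2 * _ / _)). lra.
Qed.

Lemma Cexp_Clog w : 0 < fst w -> Cexp (Clog w) = w.
Proof.
  intros Hx. destruct w as [x y]. simpl in Hx.
  unfold Clog, Cexp. rewrite Arg_pos by (simpl; lra). simpl.
  assert (Hc : 0 < Cmod (x, y)) by (pose proof (re_le_Cmod (x, y)); simpl in *; rewrite Rabs_right in H by lra; lra).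
  rewrite exp_ln by exact Hc. rewrite cos_atan, sin_atan.
  assert (Hs : 0 < sqrt (1 + (y / x)²)).
  { apply sqrt_lt_R0. pose proof (Rle_0_sqr (y / x)). lra. }
  assert (E : Cmod (x, y) = x * sqrt (1 + (y / x)²)).
  { unfold Cmod. simpl. replace (x * sqrt (1 + (y / x)²)) with (sqrt (x * x) * sqrt (1 + (y / x)²)) by (rewrite sqrt_square; lra).
    rewrite <- sqrt_mult_alt by nra. f_equal. unfold Rsqr. field. lra. }
  rewrite E. apply injective_projections; simpl; field; lra.
Qed.

Lemma dC_Clog z : 0 < fst z -> isD Clog z (/ z)%C.
Proof.
  intros Hz. set (K := Klip z). pose proof (Klip_pos z Hz) as HK. fold K in HK.
  assert (Hz0 : z <> RtoC 0). { intro E. subst. simpl in Hz. lra. }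
  apply (is_derive_bound _ _ _ (Rmin (fst z / 2) (/ K)) (20 * K ^ 2)).
  apply Rmin_pos. lra. apply Rinv_0_lt_compat; lra.
  pose proof (pow2_ge_0 K). lra.
  intros w Hw.
  assert (Hw1 : Cmod (w - z) < fst z / 2) by (pose proof (Rmin_l (fst z / 2) (/ K)); lra).
  assert (Hw2 : Cmod (w - z) < / K) by (pose proof (Rmin_r (fst z / 2) (/ K)); lra).
  pose proof (Clog_lip z w Hz Hw1) as HL. fold K in HL.
  set (u := (Clog w - Clog z)%C) in *.
  assert (Hu : Cmod u < 1).
  { apply Rle_lt_trans with (K * Cmod (w - z)). exact HL.
    apply Rmult_lt_reg_l with (/ K). apply Rinv_0_lt_compat; lra.
    rewrite <- Rmult_assoc, Rinv_l, Rmult_1_l, Rmult_1_r by lra. exact Hw2. }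
  assert (Hfw : 0 < fst w).
  { pose proof (fst_le_Cmod (w - z)%C) as Hf. simpl in Hf. apply Rabs_le_inv in Hf. lra. }
  assert (Hwz : (w - z)%C = (z * (Cexp u - 1))%C).
  { assert (Hw3 : w = (z * Cexp u)%C).
    { rewrite <- (Cexp_Clog w Hfw) at 1. rewrite <- (Cexp_Clog z Hz) at 1.
      rewrite <- Cexp_plus. f_equal. unfold u. ring. }
    rewrite Hw3 at 1. ring. }
  assert (E : (u - / z * (w - z))%C = (- (Cexp u - 1 - u))%C).
  { rewrite Hwz. field. exact Hz0. }
  rewrite E, Cmod_opp.
  eapply Rle_trans. apply Cexp_near0. exact Hu.
  pose proof (Cmod_ge_0 u) as Hu0.
  assert (Hp : Cmod u ^ 2 <= (K * Cmod (w - z)) ^ 2) by (apply pow_incr; lra).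
  rewrite Rpow_mult_distr in Hp. lra.
Qed.


Lemma disk_sq z : in_disk z -> fst z * fst z + snd z * snd z < 1.
Proof.
  unfold in_disk. intros H. pose proof (Cmod_ge_0 z).
  assert (Cmod z ^ 2 < 1) by nra. rewrite Cmod2_alt in H1. unfold Re, Im in H1. nra.
Qed.

Lemma disk_open z : in_disk z -> @locally (AbsRing_UniformSpace C_AbsRing) z in_disk.
Proof.
  intros Hz. unfold in_disk in *.
  assert (He : 0 < 1 - Cmod z) by lra.
  exists (mkposreal _ He). intros y0 Hy. change C in y0. set (y := (y0 : C)) in *. unfold ball in Hy; simpl in Hy. unfold AbsRing_ball in Hy.
  change (Cmod (y - z) < 1 - Cmod z) in Hy.
  pose proof (Cmod_triangle (y - z) z). replace (y - z + z)%C with y in H by ring. lra.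
Qed.

Lemma disk_neq1 z : in_disk z -> (RtoC 1 - z)%C <> RtoC 0.
Proof.
  intros Hz E. pose proof (disk_sq z Hz). destruct z as [x y].
  injection E as E1 E2. simpl in *. nra.
Qed.

Lemma disk_neqm1 z : in_disk z -> (RtoC 1 + z)%C <> RtoC 0.
Proof.
  intros Hz E. pose proof (disk_sq z Hz). destruct z as [x y].
  injection E as E1 E2. simpl in *. nra.
Qed.

Definition Wm (z : C) : C := ((RtoC 1 + z) / (RtoC 1 - z))%C.

Lemma Wm_re z : in_disk z -> 0 < fst (Wm z).
Proof.
  intros Hz. pose proof (disk_sq z Hz). destruct z as [x y]. simpl in H.
  assert (0 < (1 - x) ^ 2 + y ^ 2) by nra.
  assert (E : fst (Wm (x, y)) = (1 - x * x - y * y) / ((1 - x) ^ 2 + y ^ 2)).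
  { unfold Wm, Cdiv, Cinv, Cmult. simpl. field. nra. }
  rewrite E. apply Rdiv_lt_0_compat; lra.
Qed.

Lemma Wm_neq0 z : in_disk z -> Wm z <> RtoC 0.
Proof. intros Hz E. pose proof (Wm_re z Hz). rewrite E in H. simpl in H. lra. Qed.

Lemma dC_Wm z : in_disk z -> isD Wm z (RtoC 2 / ((RtoC 1 - z) * (RtoC 1 - z)))%C.
Proof.
  intros Hz. pose proof (disk_neq1 z Hz).
  assert (D1 : isD (fun x => RtoC 1 + x)%C z (RtoC 0 + RtoC 1)%C) by (apply dC_plus; [apply dC_const| apply dC_id]).
  assert (D2 : isD (fun x => RtoC 1 - x)%C z (RtoC 0 - RtoC 1)%C) by (apply dC_minus; [apply dC_const| apply dC_id]).
  assert (D3 : isD (fun x => Cinv (RtoC 1 - x))%C z ((RtoC 0 - RtoC 1) * - / ((RtoC 1 - z) * (RtoC 1 - z)))%C).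
  { apply (dC_comp Cinv (fun x => RtoC 1 - x)%C). apply dC_Cinv; auto. exact D2. }
  pose proof (dC_mult _ _ _ _ _ D1 D3) as D4.
  unfold Wm, Cdiv. 
  replace (RtoC 2 * / ((RtoC 1 - z) * (RtoC 1 - z)))%C with
    ((RtoC 0 + RtoC 1) * / (RtoC 1 - z) + (RtoC 1 + z) * ((RtoC 0 - RtoC 1) * - / ((RtoC 1 - z) * (RtoC 1 - z))))%C.
  exact D4. field. auto.
Qed.

Definition Pw (a : R) (z : C) : C := Cpow_principal (Wm z) a.
Definition K1 (a : R) (z : C) : C := (Pw a z / (RtoC 1 - z * z))%C.

Lemma Pw_eq a z : in_disk z -> Pw a z = Cexp (RtoC a * Clog (Wm z))%C.
Proof.
  intros Hz. unfold Pw, Cpow_principal. destruct (Ceq_dec (Wm z) 0); [| reflexivity].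
  exfalso. apply (Wm_neq0 z Hz). exact e.
Qed.

Lemma Pw_neq0 a z : in_disk z -> Pw a z <> RtoC 0.
Proof. intros Hz. rewrite Pw_eq by auto. apply Cexp_neq0. Qed.

Lemma one_m_sq_neq0 z : in_disk z -> (RtoC 1 - z * z)%C <> RtoC 0.
Proof.
  intros Hz. replace (RtoC 1 - z * z)%C with ((RtoC 1 - z) * (RtoC 1 + z))%C by ring.
  apply Cmult_neq_0; [apply disk_neq1 | apply disk_neqm1]; auto.
Qed.

Lemma loc_disk (f g : C -> C) z : in_disk z -> (forall x, in_disk x -> f x = g x) ->
  @locally (AbsRing_UniformSpace C_AbsRing) z (fun t => f t = g t).
Proof. intros Hz H. eapply filter_imp. 2: apply disk_open; exact Hz. intros x Hx. apply H; auto. Qed.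

Lemma dC_LogW z : in_disk z ->
  isD (fun x => Clog (Wm x)) z (RtoC 2 / ((RtoC 1 - z) * (RtoC 1 + z)))%C.
Proof.
  intros Hz.
  pose proof (dC_comp Clog Wm z _ _ (dC_Clog (Wm z) (Wm_re z Hz)) (dC_Wm z Hz)) as D.
  replace (RtoC 2 / ((RtoC 1 - z) * (RtoC 1 + z)))%C with
    (RtoC 2 / ((RtoC 1 - z) * (RtoC 1 - z)) * / Wm z)%C. exact D.
  unfold Wm. pose proof (disk_neq1 z Hz). pose proof (disk_neqm1 z Hz). field. auto.
Qed.

Lemma dC_Pw a z : in_disk z ->
  isD (Pw a) z (RtoC a * (RtoC 2 / ((RtoC 1 - z) * (RtoC 1 + z))) * Pw a z)%C.
Proof.
  intros Hz.
  assert (D2 : isD (fun x => RtoC a * Clog (Wm x))%C z (RtoC 0 * Clog (Wm z) + RtoC a * (RtoC 2 / ((RtoC 1 - z) * (RtoC 1 + z))))%C).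
  { apply (dC_mult (fun _ => RtoC a) (fun x => Clog (Wm x))). apply dC_const. apply dC_LogW; auto. }
  pose proof (dC_comp Cexp (fun x => RtoC a * Clog (Wm x))%C z _ _ (dC_Cexp _) D2) as D3.
  apply (is_derive_ext_loc (fun x => Cexp (RtoC a * Clog (Wm x))%C)).
  { apply loc_disk; auto. intros x Hx. symmetry. apply Pw_eq; auto. }
  rewrite Pw_eq by auto.
  replace (RtoC a * (RtoC 2 / ((RtoC 1 - z) * (RtoC 1 + z))))%C with
    (RtoC 0 * Clog (Wm z) + RtoC a * (RtoC 2 / ((RtoC 1 - z) * (RtoC 1 + z))))%C by ring.
  exact D3.
Qed.

Lemma RtoC_neq0 a : a <> 0 -> RtoC a <> RtoC 0.
Proof. intros H E. apply H. injection E. auto. Qed.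

Ltac solve_nz := repeat split; cbv beta; try assumption; try (apply one_m_sq_neq0; assumption); try (apply RtoC_neq0; lra).

Lemma dC_eq (f g : C -> C) (z l l' : C) : isD f z l -> (forall t, f t = g t) -> l = l' -> isD g z l'.
Proof. intros D H E. subst l'. eapply is_derive_ext. 2: exact D. exact H. Qed.

Lemma Cexp_0 : Cexp (RtoC 0) = RtoC 1.
Proof. unfold Cexp. simpl. rewrite exp_0, cos_0, sin_0. apply injective_projections; simpl; ring. Qed.

Lemma Pw_0 z : in_disk z -> Pw 0 z = RtoC 1.
Proof. intros Hz. rewrite Pw_eq by auto. rewrite Cmult_0_l. apply Cexp_0. Qed.



Lemma dk a z : in_disk z -> isD (k_fun a) z (K1 a z).
Proof.
  intros Hz. pose proof (disk_neq1 z Hz). pose proof (disk_neqm1 z Hz).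
  unfold K1. destruct (Req_EM_T a 0) as [Ha | Ha].
  - subst a. rewrite Pw_0 by auto.
    assert (D : isD (fun x => / RtoC 2 * Clog (Wm x))%C z (RtoC 0 * Clog (Wm z) + / RtoC 2 * (RtoC 2 / ((RtoC 1 - z) * (RtoC 1 + z))))%C).
    { apply (dC_mult (fun _ => / RtoC 2)%C (fun x => Clog (Wm x))). apply dC_const. apply dC_LogW; auto. }
    apply (dC_eq _ _ _ _ _ D).
    + intros t. unfold k_fun, Wm. destruct (Req_EM_T 0 0); [reflexivity| congruence].
    + field; solve_nz.
  - assert (D : isD (fun x => / (RtoC 2 * RtoC a) * (Pw a x - RtoC 1))%C z
        (RtoC 0 * (Pw a z - RtoC 1) + / (RtoC 2 * RtoC a) * (RtoC a * (RtoC 2 / ((RtoC 1 - z) * (RtoC 1 + z))) * Pw a z - RtoC 0))%C).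
    { apply (dC_mult (fun _ => / (RtoC 2 * RtoC a))%C (fun x => Pw a x - RtoC 1)%C). apply dC_const.
      apply dC_minus. apply dC_Pw; auto. apply dC_const. }
    apply (dC_eq _ _ _ _ _ D).
    + intros t. unfold k_fun, Pw, Wm. destruct (Req_EM_T a 0); [congruence| reflexivity].
    + pose proof (RtoC_neq0 a Ha). field; solve_nz.
Qed.

Lemma dK1 a z : in_disk z ->
  isD (K1 a) z (Pw a z * (RtoC 2 * RtoC a + RtoC 2 * z) / ((RtoC 1 - z * z) * (RtoC 1 - z * z)))%C.
Proof.
  intros Hz. pose proof (disk_neq1 z Hz). pose proof (disk_neqm1 z Hz).
  pose proof (one_m_sq_neq0 z Hz).
  assert (D1 : isD (fun x => RtoC 1 - x * x)%C z (RtoC 0 - (RtoC 1 * z + z * RtoC 1))%C).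
  { apply dC_minus. apply dC_const. apply (dC_mult (fun x => x) (fun x => x)); apply dC_id. }
  pose proof (dC_comp Cinv (fun x => RtoC 1 - x * x)%C z _ _ (dC_Cinv _ H1) D1) as D2.
  pose proof (dC_mult (Pw a) (fun x => Cinv (RtoC 1 - x * x))%C z _ _ (dC_Pw a z Hz) D2) as D3.
  unfold K1, Cdiv. apply (dC_eq _ _ _ _ _ D3). intros t; reflexivity.
  field; solve_nz.
Qed.


Lemma lamz_small lam z : 0 <= lam < 1 -> in_disk z -> Cmod (RtoC lam * z) < 1.
Proof.
  intros Hl Hz. unfold in_disk in Hz. rewrite Cmod_mult, Cmod_R, Rabs_right by lra.
  pose proof (Cmod_ge_0 z). nra.
Qed.

Lemma one_m_lamz lam z : 0 <= lam < 1 -> in_disk z -> (RtoC 1 - RtoC lam * z)%C <> RtoC 0.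
Proof.
  intros Hl Hz E. pose proof (lamz_small lam z Hl Hz).
  replace (RtoC lam * z)%C with (RtoC 1) in H.
  rewrite Cmod_R, Rabs_right in H; lra.
  replace (RtoC lam * z)%C with (RtoC 1 - (RtoC 1 - RtoC lam * z))%C by ring. rewrite E. ring.
Qed.

Lemma Cconj_RtoC r : Cconj (RtoC r) = RtoC r.
Proof. unfold Cconj. simpl. apply injective_projections; simpl; ring. Qed.

Section S.
Variables (a lam : R) (h g : C -> C).
Hypothesis Hl : 0 <= lam < 1.
Hypothesis Hh : analytic_on_disk h.
Hypothesis Hg : analytic_on_disk g.
Hypothesis Hk : forall z : C, in_disk z -> (h z - g z)%C = k_fun a z.
Hypothesis Hd : forall z : C, in_disk z ->
     C_derive h z <> RtoC 0 /\ (C_derive g z / C_derive h z)%C = (RtoC lam * z)%C.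

Lemma hprime z : in_disk z -> C_derive h z = (K1 a z / (RtoC 1 - RtoC lam * z))%C.
Proof.
  intros Hz.
  pose proof (C_derive_correct h z z (Hh z Hz)) as Dh.
  pose proof (C_derive_correct g z z (Hg z Hz)) as Dg.
  pose proof (dC_minus _ _ _ _ _ Dh Dg) as D.
  assert (D' : isD (k_fun a) z (C_derive h z - C_derive g z)%C).
  { apply (is_derive_ext_loc (fun x => h x - g x)%C). apply loc_disk; auto. exact D. }
  apply is_C_derive_unique in D'. pose proof (dk a z Hz) as D2. apply is_C_derive_unique in D2.
  rewrite D' in D2.
  destruct (Hd z Hz) as [Hn Hq].
  assert (Eg : C_derive g z = (RtoC lam * z * C_derive h z)%C).
  { rewrite <- Hq. field. exact Hn. }
  rewrite Eg in D2. rewrite <- D2. field. apply one_m_lamz; auto.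
Qed.

Lemma hsecond z : in_disk z -> C_derive (C_derive h) z =
  ((Pw a z * (RtoC 2 * RtoC a + RtoC 2 * z) / ((RtoC 1 - z * z) * (RtoC 1 - z * z))) * / (RtoC 1 - RtoC lam * z)
   + K1 a z * ((RtoC 0 - (RtoC 0 * z + RtoC lam * RtoC 1)) * - / ((RtoC 1 - RtoC lam * z) * (RtoC 1 - RtoC lam * z))))%C.
Proof.
  intros Hz. apply is_C_derive_unique.
  pose proof (one_m_lamz lam z Hl Hz) as Hn.
  assert (D1 : isD (fun x => RtoC 1 - RtoC lam * x)%C z (RtoC 0 - (RtoC 0 * z + RtoC lam * RtoC 1))%C).
  { apply dC_minus. apply dC_const. apply (dC_mult (fun _ => RtoC lam) (fun x => x)). apply dC_const. apply dC_id. }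
  pose proof (dC_comp Cinv (fun x => RtoC 1 - RtoC lam * x)%C z _ _ (dC_Cinv _ Hn) D1) as D2.
  pose proof (dC_mult (K1 a) (fun x => Cinv (RtoC 1 - RtoC lam * x))%C z _ _ (dK1 a z Hz) D2) as D3.
  apply (is_derive_ext_loc (fun x => K1 a x * / (RtoC 1 - RtoC lam * x))%C).
  { apply loc_disk; auto. intros x Hx. symmetry. apply hprime; auto. }
  exact D3.
Qed.

Lemma dil_eq z : in_disk z -> dilatation h g z = (RtoC lam * z)%C.
Proof. intros Hz. unfold dilatation. apply (Hd z Hz). Qed.

Lemma dil_der z : in_disk z -> C_derive (dilatation h g) z = RtoC lam.
Proof.
  intros Hz. apply is_C_derive_unique.
  assert (D : isD (fun x => RtoC lam * x)%C z (RtoC 0 * z + RtoC lam * RtoC 1)%C).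
  { apply (dC_mult (fun _ => RtoC lam) (fun x => x)). apply dC_const. apply dC_id. }
  apply (is_derive_ext_loc (fun x => RtoC lam * x)%C).
  { apply loc_disk; auto. intros x Hx. symmetry. apply dil_eq; auto. }
  apply (dC_eq _ _ _ _ _ D); [intros; reflexivity | ring].
Qed.

Lemma part1 z : in_disk z ->
     pre_schwarzian h g z =
       (2 * (z + RtoC a) / (1 - z ^ 2) + RtoC lam / (1 - RtoC lam * z)
        - RtoC (lam ^ 2) * Cconj z / RtoC (1 - (Cmod (RtoC lam * z)) ^ 2))%C.
Proof.
  intros Hz. unfold pre_schwarzian. cbv zeta.
  rewrite hsecond, hprime, dil_der, dil_eq by auto.
  rewrite Cmult_conj, Cconj_RtoC, RtoC_pow.
  pose proof (one_m_lamz lam z Hl Hz) as Hn.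
  pose proof (Pw_neq0 a z Hz). pose proof (one_m_sq_neq0 z Hz).
  assert (HD : RtoC (1 - Cmod (RtoC lam * z) ^ 2) <> RtoC 0).
  { apply RtoC_neq0. pose proof (lamz_small lam z Hl Hz). pose proof (Cmod_ge_0 (RtoC lam * z)). nra. }
  set (D := RtoC (1 - Cmod (RtoC lam * z) ^ 2)) in *.
  replace (z ^ 2)%C with (z * z)%C by ring.
  unfold K1. field. solve_nz.
Qed.
End S.

Lemma div_mul_le N Dn m : 0 <= N -> 0 < m -> m <= Dn -> N / Dn * m <= N.
Proof.
  intros HN Hm HD. unfold Rdiv. rewrite Rmult_assoc.
  rewrite <- (Rmult_1_r N) at 2. apply Rmult_le_compat_l; auto.
  apply Rmult_le_reg_l with Dn. lra. rewrite <- Rmult_assoc, Rinv_r, Rmult_1_l, Rmult_1_r; lra.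
Qed.

Lemma real_ineq L r : 0 <= L < 1 -> 0 <= r < 1 -> L * (1 - r ^ 2) <= (2 * (1 - r) + L + L ^ 2 * (2 - r)) * (1 - L * r).
Proof.
  intros [H1 H2] [H3 H4].
  assert (0 <= L*r) by nra. assert (L*r <= r) by nra. assert (0 <= (1-r)*(1-L*r)) by nra.
  assert (0 <= L * L * (1-r) * (1 - L*r)) by (repeat apply Rmult_le_pos; nra).
  assert (0 <= L * r * (1 - L)) by (repeat apply Rmult_le_pos; nra).
  assert (0 <= L * L * (1 - L) * r) by (repeat apply Rmult_le_pos; nra).
  nra.
Qed.

Lemma Cmod_tri3 (x y w : C) : Cmod (x + y - w)%C <= Cmod x + Cmod y + Cmod w.
Proof.
  pose proof (Cmod_triangle (x + y)%C (- w)%C). pose proof (Cmod_triangle x y).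
  rewrite Cmod_opp in H. unfold Cminus. lra.
Qed.

Lemma point_bound a lam z : 0 <= lam < 1 -> in_disk z ->
  Cmod (2 * (z + RtoC a) / (1 - z ^ 2) + RtoC lam / (1 - RtoC lam * z)
        - RtoC (lam ^ 2) * Cconj z / RtoC (1 - (Cmod (RtoC lam * z)) ^ 2))%C * (1 - Cmod z ^ 2)
  <= 2 * (1 + Rabs a) + 2 * lam ^ 2 + lam.
Proof.
  intros Hl Hz. pose proof (Cmod_ge_0 z) as Hr0. pose proof Hz as Hr1. unfold in_disk in Hr1.
  set (r := Cmod z) in *.
  assert (Hm : 0 < 1 - r ^ 2) by nra.
  eapply Rle_trans. apply Rmult_le_compat_r. lra. apply Cmod_tri3.
  rewrite !Rmult_plus_distr_r.
  assert (B1 : Cmod (2 * (z + RtoC a) / (1 - z ^ 2))%C * (1 - r ^ 2) <= 2 * (r + Rabs a)).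
  { replace (z ^ 2)%C with (z * z)%C by ring.
    rewrite Cmod_div by (apply one_m_sq_neq0; auto).
    assert (N : Cmod (2 * (z + RtoC a))%C <= 2 * (r + Rabs a)).
    { rewrite Cmod_mult, Cmod_R, Rabs_right by lra. pose proof (Cmod_triangle z (RtoC a)).
      rewrite Cmod_R in H. fold r in H. lra. }
    eapply Rle_trans. 2: exact N. apply div_mul_le. apply Cmod_ge_0. lra.
    pose proof (Cmod_triangle (RtoC 1 - z * z) (z * z)).
    replace (RtoC 1 - z * z + z * z)%C with (RtoC 1) in H by ring.
    rewrite Cmod_R, Rabs_right, Cmod_mult in H by lra. fold r in H. lra. }
  assert (Hlz : Cmod (RtoC lam * z)%C = lam * r).
  { rewrite Cmod_mult, Cmod_R, Rabs_right by lra. reflexivity. }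
  assert (B2 : Cmod (RtoC lam / (1 - RtoC lam * z))%C * (1 - r ^ 2) <= 2 * (1 - r) + lam + lam ^ 2 * (2 - r)).
  { rewrite Cmod_div by (apply one_m_lamz; auto). rewrite Cmod_R, Rabs_right by lra.
    assert (HD : 1 - lam * r <= Cmod (RtoC 1 - RtoC lam * z)%C).
    { pose proof (Cmod_triangle (RtoC 1 - RtoC lam * z) (RtoC lam * z)).
      replace (RtoC 1 - RtoC lam * z + RtoC lam * z)%C with (RtoC 1) in H by ring.
      rewrite Cmod_R, Rabs_right in H by lra. lra. }
    assert (0 < 1 - lam * r) by nra.
    apply Rle_trans with (lam * (1 - r ^ 2) / (1 - lam * r)).
    { unfold Rdiv. rewrite Rmult_assoc, (Rmult_comm (/ _)), <- Rmult_assoc.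
      apply Rmult_le_compat_l. apply Rmult_le_pos; lra. apply Rinv_le_contravar; lra. }
    apply Rmult_le_reg_r with (1 - lam * r). lra.
    unfold Rdiv. rewrite Rmult_assoc, Rinv_l, Rmult_1_r by lra.
    apply real_ineq; lra. }
  assert (B3 : Cmod (RtoC (lam ^ 2) * Cconj z / RtoC (1 - Cmod (RtoC lam * z) ^ 2))%C * (1 - r ^ 2) <= lam ^ 2 * r).
  { rewrite Hlz.
    assert (0 < 1 - (lam * r) ^ 2) by nra.
    rewrite Cmod_div by (apply RtoC_neq0; lra).
    rewrite Cmod_mult, Cmod_conj, !Cmod_R, !Rabs_right by (try lra; pose proof (pow2_ge_0 lam); lra).
    fold r. apply div_mul_le. apply Rmult_le_pos; [apply pow2_ge_0 | lra]. lra.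
    assert (lam * r <= r) by nra. assert (0 <= lam * r) by nra. assert ((lam * r) ^ 2 <= r ^ 2) by (apply pow_incr; lra). lra. }
  lra.
Qed.


Theorem theorem2p2 (a lam : R) (h g : C -> C) :
  0 <= lam < 1 ->
  analytic_on_disk h -> analytic_on_disk g ->
  h 0%C = 0%C -> g 0%C = 0%C ->
  (forall z : C, in_disk z -> (h z - g z)%C = k_fun a z) ->
  (forall z : C, in_disk z ->
     C_derive h z <> 0%C /\ (C_derive g z / C_derive h z)%C = (RtoC lam * z)%C) ->
  (forall z : C, in_disk z ->
     pre_schwarzian h g z =
       (2 * (z + RtoC a) / (1 - z ^ 2) + RtoC lam / (1 - RtoC lam * z)
        - RtoC (lam ^ 2) * Cconj z / RtoC (1 - (Cmod (RtoC lam * z)) ^ 2))%C)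
  /\ Rbar_le (pre_schwarzian_norm h g) (2 * (1 + Rabs a) + 2 * lam ^ 2 + lam).
Proof.
  intros Hl Hh Hg _ _ Hk Hd. split.
  - intros z Hz. eapply part1; eauto.
  - unfold pre_schwarzian_norm.
    destruct (Lub_Rbar_correct (fun r : R => exists z : C, in_disk z /\
              r = Cmod (pre_schwarzian h g z) * (1 - (Cmod z) ^ 2))) as [_ Hlub].
    apply Hlub. intros x [z [Hz Ex]]. subst x. simpl.
    rewrite (part1 a lam h g) by auto. apply point_bound; auto.
Qed.
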